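(* Let $\mathcal G$ be an ADMG with vertex set $\mathbf V$ and let $\mathbf A,\mathbf Y\subseteq\mathbf V$ be disjoint, such that $\mathbf V\subseteq\mathrm{an}_{\mathcal G}(\mathbf Y)$, $\mathbf V\setminus\mathrm{an}_{\mathcal G_{\mathbf V\setminus\mathbf A}}(\mathbf Y)\subseteq\mathbf A$, (1) for every $\mathbf S\in\mathcal D(\mathcal G_{\mathbf V\setminus\mathbf A})$, $(\mathrm{pa}_{\mathcal G}(\mathbf S)\setminus\mathbf S)\cap\mathbf D_{\mathbf S}=\emptyset$, and (2) for all $\mathbf S_1,\mathbf S_2\in\mathcal D(\mathcal G_{\mathbf V\setminus\mathbf A})$, $\mathbf D_{\mathbf S_1}\cap\mathbf D_{\mathbf S_2}\neq\emptyset$ implies $\mathbf S_1=\mathbf S_2$. Fix $\mathbf a\in\mathfrak X_{\mathbf A}$. Then there exist a DAG $\mathcal G^\dagger$ with vertex set $\mathbf V$, a set $\boldsymbol\alpha$ of edges of $\mathcal G^\dagger$ and an edge intervention $\eta_{\mathfrak a_{\boldsymbol\alpha}}$ such that $p(\mathbf Y(\mathfrak a_{\boldsymbol\alpha}))$ is identified under the multiple worlds model (MWM) for $\mathcal G^\dagger$ via the margin onto $\mathbf Y$ of the edge g-formula $$p(\mathbf V(\mathfrak a_{\boldsymbol\alpha})=\mathbf v)=\prod_{V\in\mathbf V}p\big(V=\mathbf v_V\mid \mathbf v_{\mathrm{pa}^{\overline{\boldsymbol\alpha}}_{\mathcal G^\dagger}(V)},\mathfrak a_{\{(WV)\in\boldsymbol\alpha\}}\big),$$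 and this margin is equal to the identifying g-functional for $p(\mathbf Y(\mathbf a))$ in terms of $p(\mathbf V)$ in $\mathcal G$, namely $$\sum_{\mathbf v_{\mathbf V\setminus(\mathbf Y\cup\mathbf A_f)}}\prod_{V\in\mathbf V\setminus\mathbf A_f}p\Big((\mathbf y\cup\mathbf v)_V\ \Big|\ \mathbf a_{\mathrm{pre}_{\prec}(V)\cap(\mathbf A\setminus\mathbf D_V)},(\mathbf y\cup\mathbf v)_{\mathrm{pre}_{\prec}(V)\setminus(\mathbf A\setminus\mathbf D_V)}\Big).$$
   Context: An acyclic directed mixed graph (ADMG) is a graph with directed and bidirected edges and no directed cycles; it represents hidden-variable DAGs via latent projection (for a DAG on $\mathbf V\cup\mathbf L$: $V\to W$ iff there is a directed path from $V$ to $W$ with all intermediate vertices in $\mathbf L$; $V\leftrightarrow W$ iff there is a path between them with arrowheads into both endpoints and all intermediate vertices non-colliders in $\mathbf L$). $\mathcal G_{\mathbf B}$ is the induced subgraph on $\mathbf B$; $\mathrm{an}$ denotes ancestors (inclusive); districts are connected components of the bidirected part, $\mathcal D(\cdot)$ the set of districts, $\mathrm{dis}_{\mathcal G}(\mathbf S)$ the district containing $\mathbf S$. For $\mathbf S\in\mathcal D(\mathcal G_{\mathbf V\setminus\mathbf A})$, $\mathbf D_{\mathbf S}=\mathrm{dis}_{\mathcal G_{\mathrm{an}_{\mathcal G}(\mathbf S)}}(\mathbf S)$; $\mathbf A_f=\mathbf A\setminus\bigcup_{\mathbf S}\mathbf D_{\mathbf S}$; for $V\in\mathbf V\setminus\mathbf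 A_f$, $\mathbf D_V$ is the unique $\mathbf D_{\mathbf S}$ containing $V$. $\prec$ is a topological order of $\mathcal G$ and $\mathrm{pre}_\prec(V)=\{W\ne V:W\prec V\}$. For a DAG, the multiple worlds model (MWM) is the set of causal structures (collections of one-step potential outcomes $V(\mathbf b)$, $\mathbf b\in\mathfrak X_{\mathrm{pa}(V)}$, with a joint distribution) in which the sets $\{V(\mathbf b):\mathbf b\}$, $V\in\mathbf V$, are mutually independent. Edge interventions: for a set $\boldsymbol\alpha$ of directed edges, $\mathfrak a_{\boldsymbol\alpha}$ assigns to each edge a value of its source; responses are defined recursively by $V(\mathfrak a)=V(\mathfrak a_{\{(WV)\in\boldsymbol\alpha\}},\{W(\mathfrak a):W\in\mathrm{pa}^{\overline{\boldsymbol\alpha}}(V)\})$, with $\mathrm{pa}^{\overline{\boldsymbol\alpha}}(V)=\{W\in\mathrm{pa}(V):(WV)\notin\boldsymbol\alpha\}$. *)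

(* Defs.v *)
From HB Require Import structures.
From mathcomp Require Import all_boot all_order all_algebra.
Set Implicit Arguments. Unset Strict Implicit. Unset Printing Implicit Defensive.
Import Order.TTheory GRing.Theory Num.Theory.
Local Open Scope ring_scope.

Section Graphs.
Variable V : finType.

(* A graph on V is given by a directed-edge relation [de] (de w v <=> w -> v)
   and, for ADMGs, a bidirected-edge relation [bi]. *)
Definition acyclic (de : rel V) : Prop :=
  forall w v, de w v -> ~~ connect de v w.

Definition is_DAG (de : rel V) : Prop := acyclic de.

Definition is_ADMG (de bi : rel V) : Prop :=
  [/\ acyclic de, (forall v w, bi v w = bi w v) & (forall v, ~~ bi v v)].

Definition induced (e : rel V) (B : {set V}) : rel V :=
  [rel x y | [&& e x y, x \in B & y \in B]].

Definition anc (e : rel V) (S : {set V}) : {set V} :=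
  [set w | [exists s in S, connect e w s]].

(* pa(S) (not removing S) *)
Definition pa (de : rel V) (S : {set V}) : {set V} :=
  [set w | [exists s in S, de w s]].

Definition dis (bi : rel V) (B : {set V}) (x : V) : {set V} :=
  [set y in B | connect (induced bi B) x y].

Definition districts (bi : rel V) (B : {set V}) : {set {set V}} :=
  [set dis bi B x | x in B].

(* D_S = dis_{G_{an_G(S)}}(S): the district of G_{an_G(S)} containing S
   (written as the union of the districts of the elements of S, which is
   that district whenever S is bidirected-connected, as for S a district
   of G_{V \ A}). *)
Definition DS (de bi : rel V) (S : {set V}) : {set V} :=
  \bigcup_(x in S) dis bi (anc de S) x.

Definition Af (de bi : rel V) (A : {set V}) : {set V} :=
  A :\: \bigcup_(S in districts bi (~: A)) DS de bi S.

(* D_V: the unique D_S containing v (unique under hypothesis (2));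
   written as the union of all D_S containing v. *)
Definition DV (de bi : rel V) (A : {set V}) (v : V) : {set V} :=
  \bigcup_(S in districts bi (~: A) | v \in DS de bi S) DS de bi S.

End Graphs.

Section Prob.
Variables (V : finType) (X : V -> finType) (R : realFieldType).

Definition Cfg := {dffun forall v : V, X v}.

Definition agree (S : {set V}) (x y : Cfg) : bool :=
  [forall v in S, x v == y v].

Definition is_distr (p : Cfg -> R) : Prop :=
  (forall x, 0 <= p x) /\ \sum_(x : Cfg) p x = 1.

Definition is_pos_distr (p : Cfg -> R) : Prop :=
  (forall x, 0 < p x) /\ \sum_(x : Cfg) p x = 1.

Definition Prob (p : Cfg -> R) (E : pred Cfg) : R := \sum_(x | E x) p x.

Definition cond (p : Cfg -> R) (E F : pred Cfg) : R :=
  Prob p (predI E F) / Prob p F.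

(* ea w v is the value (of w) assigned to the edge w -> v, used iff al w v *)
Definition edge_gformula (gd al : rel V) (ea : forall w v : V, X w)
    (p : Cfg -> R) (v : Cfg) : R :=
  \prod_(u : V)
    cond p [pred x : Cfg | x u == v u]
           [pred x : Cfg | [forall w, gd w u ==>
               (x w == if al w u then ea w u else v w)]].

Definition margin (Y : {set V}) (q : Cfg -> R) (y : Cfg) : R :=
  \sum_(x | agree Y x y) q x.

(* rk is the rank function of the topological order: pre(u) = {w | rk w < rk u} *)
Definition gfunctional (de bi : rel V) (rk : V -> nat) (A Y : {set V})
    (a : Cfg) (p : Cfg -> R) (y : Cfg) : R :=
  let Af := Af de bi A in
  \sum_(z : Cfg | agree (Y :|: Af) z y)
    \prod_(u in ~: Af)
      cond p [pred x : Cfg | x u == z u]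
             [pred x : Cfg | [forall w, (rk w < rk u)%N ==>
                 (x w == if w \in A :\: DV de bi A u then a w else z w)]].

Definition PaCfg (gd : rel V) (v : V) :=
  {dffun forall w : {w : V | gd w v}, X (val w)}.
(* the collection (v(b))_{b in X_{pa(v)}} *)
Definition Resp (gd : rel V) (v : V) := {ffun PaCfg gd v -> X v}.
(* joint value of all one-step potential outcomes *)
Definition Omega (gd : rel V) := {dffun forall v : V, Resp gd v}.

Definition pacfg (gd : rel V) (v : V) (f : forall w : V, X w) : PaCfg gd v :=
  [ffun w : {w : V | gd w v} => f (val w)].

Definition marg (gd : rel V) (mu : Omega gd -> R) (v : V) (r : Resp gd v) : R :=
  \sum_(om : Omega gd | om v == r) mu om.
Arguments marg {gd} mu v r.

(* multiple worlds model: the families {v(b) : b}, v in V, are mutually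
   independent (joint pmf = product of the marginal pmfs) *)
Definition MWM (gd : rel V) (mu : Omega gd -> R) : Prop :=
  [/\ forall om, 0 <= mu om, \sum_(om : Omega gd) mu om = 1
    & forall om, mu om = \prod_(v : V) marg mu v (om v)].

(* om realizes V(a_al) = x : for every v,
   x_v = v(a_{al into v}, x_{pa^{not al}(v)})  (recursive definition;
   the solution is unique as gd is acyclic) *)
Definition solves (gd al : rel V) (ea : forall w v : V, X w)
    (om : Omega gd) (x : Cfg) : bool :=
  [forall v, x v == om v (pacfg gd v (fun w => if al w v then ea w v else x w))].

Definition cf (gd al : rel V) (ea : forall w v : V, X w)
    (mu : Omega gd -> R) (x : Cfg) : R :=
  \sum_(om : Omega gd | solves al ea om x) mu om.

Definition obs (gd : rel V) (mu : Omega gd -> R) (x : Cfg) : R :=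
  \sum_(om : Omega gd |
          [forall v, x v == om v (pacfg gd v (fun w => x w))]) mu om.

End Prob.

(* Main.v *)
Require Import Defs.
From HB Require Import structures.
From mathcomp Require Import all_boot all_order all_algebra.
From mathcomp Require Import lra.
Set Implicit Arguments. Unset Strict Implicit. Unset Printing Implicit Defensive.
Import Order.TTheory GRing.Theory Num.Theory.
Local Open Scope ring_scope.

Section Gen.
Variables (I : finType) (T : I -> finType) (R : comPzRingType).
Definition DF := {dffun forall i, T i}.
Definition upd (x : DF) (s : I) (c : T s) : DF := [ffun j => dfwith x c j].
Arguments upd x s c : clear implicits.
Definition gagree (S : {set I}) (x y : DF) : bool := [forall v in S, x v == y v].

Lemma upd_same x s c : upd x s c s = c.
Proof. by rewrite ffunE dfwith_in. Qed.
Lemma upd_other x s c j : s != j -> upd x s c j = x j.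
Proof. by move=> h; rewrite ffunE dfwith_out. Qed.
Lemma upd_upd x s c c' : upd (upd x s c) s c' = upd x s c'.
Proof.
apply/ffunP=> j; case: (eqVneq s j) => [<-|h]; first by rewrite !upd_same.
by rewrite !upd_other.
Qed.
Lemma upd_id x s : upd x s (x s) = x.
Proof.
apply/ffunP=> j; case: (eqVneq s j) => [<-|h]; first by rewrite !upd_same.
by rewrite !upd_other.
Qed.
Lemma upd_eq x s c : (upd x s c == x) = (x s == c).
Proof.
apply/eqP/eqP => [<-|<-]; first by rewrite upd_same.
exact: upd_id.
Qed.

Definition indep (f : DF -> R) s := forall x c, f (upd x s c) = f x.

Lemma L1 (P : pred DF) s d0 (F : DF -> R) :
  (forall x c, P (upd x s c) = P x) ->
  \sum_(x | P x) F x = \sum_(x | P x && (x s == d0)) \sum_(c : T s) F (upd x s c).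
Proof.
move=> HP.
rewrite (partition_big (fun x : DF => x s) xpredT) //=.
rewrite exchange_big /=; apply: eq_bigr => c _.
rewrite (reindex_onto (fun x => upd x s c) (fun x => upd x s d0)).
  apply: eq_bigl => x; rewrite HP upd_same eqxx andbT upd_upd upd_eq.
  by [].
by move=> x /andP[_ /eqP <-]; rewrite upd_upd upd_id.
Qed.

Lemma Gen (rk : I -> nat) (N : {set I}) (f : I -> DF -> R) (sg : I -> R) (d : DF) :
  forall (B : {set I}) (P : pred DF), [disjoint N & B] ->
  (forall s x c, s \in B -> P (upd x s c) = P x) ->
  (forall s v, s \in B -> v \in N -> indep (f v) s) ->
  (forall s v, s \in B -> v \in B -> s != v -> (rk v <= rk s)%N -> indep (f v) s) ->
  (forall s x, s \in B -> \sum_(c : T s) f s (upd x s c) = sg s) ->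
  \sum_(x | P x) \prod_(v | (v \in N) || (v \in B)) f v x
  = (\sum_(x | P x && gagree B x d) \prod_(v in N) f v x) * \prod_(s in B) sg s.
Proof.
move=> B; move: {2}#|B| (erefl #|B|) => n; elim: n B => [|n IH] B.
  move/eqP; rewrite cards_eq0 => /eqP -> P _ _ _ _ _.
  rewrite big_set0 mulr1; apply: eq_big => [x|x _].
    by rewrite /gagree; apply/esym; case: (P x) => //=; apply/forallP=> v; rewrite inE.
  by apply: eq_bigl => v; rewrite inE orbF.
move=> cB P dNB HP H1 H2 H3.
have [s0 s0B] : exists s0, s0 \in B.
  by apply/set0Pn; rewrite -card_gt0 cB.
pose s := [arg max_(s > s0 in B) rk s].
have sB : s \in B by rewrite /s; case: arg_maxnP.
have smax : forall v, v \in B -> (rk v <= rk s)%N.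
  by rewrite /s; case: arg_maxnP => // i _ h v /h.
have sN : s \notin N by rewrite (disjointFl dNB sB).
pose B' := B :\ s.
have cB' : #|B'| = n by rewrite /B' (cardsD1 s B) sB in cB; case: cB.
have eqP' : forall x, P x -> \prod_(v | (v \in N) || (v \in B)) f v x
   = f s x * \prod_(v | (v \in N) || (v \in B')) f v x.
  move=> x _; rewrite (bigD1 s) /=; last by rewrite sB orbT.
  congr (_ * _); apply: eq_bigl => v; rewrite /B' !inE.
  by case: (eqVneq v s) => [->|]; rewrite ?(negbTE sN) ?andbT ?andbF.
rewrite (eq_bigr _ eqP') (@L1 P s (d s)); last by move=> x c; apply: HP.
pose P' := [pred x | P x && (x s == d s)].
have -> : \sum_(x | P x && (x s == d s))
      \sum_(c : T s) f s (upd x s c) * \prod_(v | (v \in N) || (v \in B')) f v (upd x s c)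
    = \sum_(x | P' x) (\prod_(v | (v \in N) || (v \in B')) f v x) * sg s.
  apply: eq_bigr => x _.
  rewrite -(H3 s x sB) mulr_sumr; apply: eq_bigr => c _; rewrite mulrC; congr (_ * _).
  apply: eq_bigr => v /orP[vN|vB'].
    by apply: (H1 s v sB vN).
  move: vB'; rewrite /B' !inE => /andP[vs vB].
  by apply: (H2 s v sB vB); rewrite ?(smax v vB) // eq_sym.
rewrite -big_distrl /=.
rewrite (IH B' cB' P').
- rewrite (bigD1 s sB) /= -mulrA [sg s * _]mulrC.
  congr (_ * (_ * _)); last by apply: eq_bigl => v; rewrite /B' !inE andbC.
  apply: eq_bigl => x; rewrite -andbA; congr (_ && _).
  rewrite /gagree.
  apply/andP/forallP => [[/eqP xs /forallP h] v| h]; first last.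
    split; first by apply: (implyP (h s)).
    by apply/forallP=> v; apply/implyP => /setD1P[_ vB]; apply: (implyP (h v)).
  apply/implyP=> vB; case: (eqVneq v s) => [->|vs]; first by rewrite xs.
  by apply: (implyP (h v)); rewrite /B' !inE vs.
- by apply: (disjointWr _ dNB); rewrite /B' subsetDl.
- move=> s1 x c /setD1P[s1s s1B] /=; rewrite HP // upd_other // eq_sym //.
- by move=> s1 v /setD1P[_ s1B]; apply: H1.
- by move=> s1 v /setD1P[_ s1B] /setD1P[_ vB]; apply: H2.
- by move=> s1 x /setD1P[_ s1B]; apply: H3.
Qed.
End Gen.
Arguments upd {I T} x s c.

Section Dist.
Variables (I : finType) (T : I -> finType) (R : comPzRingType).
Lemma gagree_all (x d : DF T) : gagree [set: I] x d = (x == d).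
Proof.
apply/forallP/eqP => [h|->]; last by move=> v; rewrite eqxx implybT.
by apply/ffunP => v; apply/eqP; apply: (implyP (h v)); rewrite inE.
Qed.
Lemma gagree_upd (S : {set I}) (x d : DF T) s c : s \notin S ->
  gagree S (upd x s c) d = gagree S x d.
Proof.
move=> sS; apply: eq_forallb => w; case: (boolP (w \in S)) => //= wS.
by rewrite upd_other //; apply: contraNneq sS => ->.
Qed.
Lemma gagreeC (S : {set I}) (x d : DF T) :
  gagree S x d && gagree (~: S) x d = (x == d).
Proof.
apply/andP/eqP => [[/forallP h1 /forallP h2]|->].
  apply/ffunP => v; apply/eqP; case: (boolP (v \in S)) => vS.
    exact: (implyP (h1 v)).
  by apply: (implyP (h2 v)); rewrite inE.
by split; apply/forallP => v; rewrite eqxx implybT.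
Qed.
Lemma gagreeU (S1 S2 : {set I}) (x d : DF T) :
  gagree (S1 :|: S2) x d = gagree S1 x d && gagree S2 x d.
Proof.
apply/forallP/andP => [h|[/forallP h1 /forallP h2] v].
  by split; apply/forallP => v; apply/implyP => vS; apply: (implyP (h v)); rewrite inE vS ?orbT.
by rewrite inE; apply/implyP => /orP[] vS; [apply: (implyP (h1 v)) | apply: (implyP (h2 v))].
Qed.

Lemma Dist (Pr : forall i, pred (T i)) (g : forall i, T i -> R) (d : DF T) :
  \sum_(x : DF T | [forall i, Pr i (x i)]) \prod_i g i (x i)
  = \prod_i \sum_(c | Pr i c) g i c.
Proof.
pose f i (x : DF T) := if Pr i (x i) then g i (x i) else 0.
have d0 : [disjoint (set0 : {set I}) & [set: I]] by rewrite disjoints_subset sub0set.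
have H1 : forall s v, s \in [set: I] -> v \in set0 -> indep (f v) s.
  by move=> s v _; rewrite inE.
have H2 : forall s v, s \in [set: I] -> v \in [set: I] -> s != v -> (0 <= 0)%N -> indep (f v) s.
  by move=> s v _ _ sv _ x c; rewrite /f upd_other.
have H3 : forall s x, s \in [set: I] -> \sum_c f s (upd x s c) = \sum_(c | Pr s c) g s c.
  by move=> s x _; rewrite [RHS]big_mkcond; apply: eq_bigr => c _; rewrite /f upd_same.
have H := @Gen I T R (fun _ => 0%N) set0 f (fun i => \sum_(c | Pr i c) g i c) d
   [set: I] predT d0 (fun _ _ _ _ => erefl) H1 H2 H3.
have -> : \prod_i \sum_(c | Pr i c) g i c = \prod_(i in [set: I]) \sum_(c | Pr i c) g i c.
  by apply: eq_bigl => i; rewrite inE.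
rewrite big_mkcond /=.
transitivity (\sum_x \prod_(v | (v \in set0) || (v \in [set: I])) f v x).
  apply: eq_bigr => x _; case: (boolP [forall i, Pr i (x i)]) => [/forallP h|].
    by apply: eq_big => [v|v _]; rewrite ?inE // /f h.
  move=> /forallPn[i hi].
  rewrite (bigD1 i) /=; last by rewrite !inE.
  by rewrite /f (negbTE hi) mul0r.
rewrite H (eq_bigl (pred1 d)); last by move=> x; rewrite /= gagree_all.
by rewrite big_pred1_eq big_set0 mul1r.
Qed.
End Dist.

Section ProbH.
Variables (V : finType) (X : V -> finType) (R : realFieldType).

Lemma cond_ext (p : Cfg X -> R) (E E' F F' : pred (Cfg X)) :
  E =1 E' -> F =1 F' -> cond p E F = cond p E' F'.
Proof.
move=> hE hF; rewrite /cond /Prob; congr (_ / _); apply: eq_bigl => x /=.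
  by rewrite hE hF.
by rewrite hF.
Qed.

Lemma Prob_neq0 (p : Cfg X -> R) (F : pred (Cfg X)) x0 :
  (forall x, 0 < p x) -> F x0 -> Prob p F != 0.
Proof.
move=> hp Fx0; rewrite /Prob (bigD1 x0) //=.
have h1 := hp x0.
have h2 : 0 <= \sum_(i | F i && (i != x0)) p i by apply: sumr_ge0 => i _; apply: ltW.
apply/eqP => h; lra.
Qed.

Lemma sum_cond (p : Cfg X -> R) (F : pred (Cfg X)) s :
  Prob p F != 0 -> \sum_(c : X s) cond p [pred x : Cfg X | x s == c] F = 1.
Proof.
move=> h; rewrite /cond -mulr_suml.
suff -> : \sum_(c : X s) Prob p (predI [pred x : Cfg X | x s == c] F) = Prob p F.
  by rewrite divff.
rewrite /Prob (partition_big (fun x : Cfg X => x s) xpredT) //=.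
apply: eq_bigr => c _; apply: eq_bigl => x /=; by rewrite andbC.
Qed.
End ProbH.
Section Part3.
Variables (V : finType) (X : V -> finType) (R : realFieldType) (rk : V -> nat).
Hypothesis rkI : injective rk.
Local Notation gd := [rel w v : V | (rk w < rk v)%N].
Variables (mu : Omega X gd -> R).
Hypothesis hmu : MWM mu.

Definition Q v (b : PaCfg X gd v) (c : X v) : R :=
  \sum_(r : Resp X gd v | r b == c) marg mu r.

Lemma sum_marg v : \sum_(r : Resp X gd v) marg mu r = 1.
Proof.
case: hmu => _ h1 _; rewrite -h1 [RHS](partition_big (fun om : Omega X gd => om v) xpredT) //.
Qed.

Lemma sumQ v b : \sum_(c : X v) Q b c = 1.
Proof.
rewrite -(sum_marg v) [RHS](partition_big (fun r : Resp X gd v => r b) xpredT) //.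
Qed.

Lemma fact1 (b : forall v, PaCfg X gd v) (x : Cfg X) (d : Omega X gd) :
  \sum_(om : Omega X gd | [forall v, x v == om v (b v)]) mu om
  = \prod_v Q (b v) (x v).
Proof.
case: hmu => _ _ h.
rewrite (eq_bigr _ (fun om _ => h om)).
rewrite (@Dist V (Resp X gd) R (fun v r => x v == r (b v)) (fun v r => marg mu r) d).
by apply: eq_bigr => v _; apply: eq_bigl => r; rewrite eq_sym.
Qed.
End Part3.
Section Part3b.
Variables (V : finType) (X : V -> finType) (R : realFieldType) (rk : V -> nat).
Hypothesis rkI : injective rk.
Local Notation gd := [rel w v : V | (rk w < rk v)%N].
Variables (mu : Omega X gd -> R).
Hypothesis hmu : MWM mu.

Definition fQ v (x : Cfg X) : R := Q mu (pacfg gd v (fun w => x w)) (x v).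

Lemma obsE x : obs mu x = \prod_v fQ v x.
Proof.
exact: (fact1 hmu (fun v => pacfg gd v (fun w => x w)) x
   [ffun v => [ffun _ : PaCfg X gd v => x v]]).
Qed.

Lemma pacfg_upd v (x : Cfg X) s c : (forall w, gd w v -> w != s) ->
  pacfg gd v (fun w => upd x s c w) = pacfg gd v (fun w => x w).
Proof.
move=> h; apply/ffunP => w; rewrite !ffunE dfwith_out //.
by rewrite eq_sym; apply: h; case: w.
Qed.

Lemma indep_fQ v s : (forall w, gd w v -> w != s) -> s != v -> indep (fQ v) s.
Proof. by move=> h sv x c; rewrite /fQ pacfg_upd // upd_other. Qed.

Lemma ML k (d : Cfg X) :
  \sum_(x | gagree [set w | (rk w < k)%N] x d) obs mu x
  = \prod_(v | (rk v < k)%N) fQ v d.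
Proof.
pose N := [set w | (rk w < k)%N].
have dj : [disjoint N & ~: N] by rewrite disjoints_subset setCK.
have HP : forall s (x : Cfg X) c, s \in ~: N ->
    gagree N (upd x s c) d = gagree N x d.
  by move=> s x c; rewrite inE => sN; apply: gagree_upd.
have H1 : forall s v, s \in ~: N -> v \in N -> indep (fQ v) s.
  move=> s v; rewrite !inE -leqNgt => sN vN; apply: indep_fQ.
    by move=> w /= wv; apply/eqP => ws; move: sN; rewrite -ws leqNgt (ltn_trans wv vN).
  by apply/eqP => sv; move: sN; rewrite sv leqNgt vN.
have H2 : forall s v, s \in ~: N -> v \in ~: N -> s != v -> (rk v <= rk s)%N ->
    indep (fQ v) s.
  move=> s v _ _ sv vs; apply: indep_fQ => // w /= wv.
  by apply/eqP => ws; move: vs; rewrite -ws leqNgt wv.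
have H3 : forall s (x : Cfg X), s \in ~: N -> \sum_c fQ s (upd x s c) = 1.
  move=> s x _; rewrite -(sumQ hmu (pacfg gd s (fun w => x w))).
  apply: eq_bigr => c _; rewrite /fQ pacfg_upd ?upd_same // => w /= ws.
  by apply/eqP => e; move: ws; rewrite e ltnn.
have := @Gen V X R rk N fQ (fun _ => 1) d (~: N) (fun x => gagree N x d) dj HP H1 H2 H3.
rewrite big1_eq mulr1 => H.
rewrite (eq_bigr _ (fun x _ => obsE x)).
have -> : \sum_(x | gagree [set w | (rk w < k)%N] x d) \prod_v fQ v x
   = \sum_(x | gagree N x d) \prod_(v | (v \in N) || (v \in ~: N)) fQ v x.
  by apply: eq_bigr => x _; apply: eq_bigl => v; rewrite [v \in ~: N]inE orbN.
rewrite H (eq_bigl (pred1 d)); last by move=> x; rewrite /= gagreeC.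
by rewrite big_pred1_eq; apply: eq_bigl => v; rewrite inE.
Qed.
End Part3b.
Section Part3c.
Variables (V : finType) (X : V -> finType) (R : realFieldType) (rk : V -> nat).
Hypothesis rkI : injective rk.
Local Notation gd := [rel w v : V | (rk w < rk v)%N].
Variables (mu : Omega X gd -> R).
Hypothesis hmu : MWM mu.
Hypothesis hpos : forall x, 0 < obs mu x.

Lemma part3pt (al : rel V) (ea : forall w v : V, X w) (x : Cfg X) :
  cf al ea mu x = edge_gformula gd al ea (obs mu) x.
Proof.
rewrite /cf (fact1 hmu (fun v => pacfg gd v (fun w => if al w v then ea w v else x w)) x
   [ffun v => [ffun _ : PaCfg X gd v => x v]]).
rewrite /edge_gformula; apply: eq_bigr => u _.
pose E : Cfg X := [ffun w => if al w u then ea w u else x w].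
pose E' := upd E u (x u).
pose F := [pred x' : Cfg X | [forall w, gd w u ==> (x' w == if al w u then ea w u else x w)]].
have hden : Prob (obs mu) F = \prod_(v | (rk v < rk u)%N) fQ mu v E.
  rewrite -(ML hmu) /Prob; apply: eq_bigl => x' /=; apply: eq_forallb => w.
  by rewrite inE ffunE.
have hnum : Prob (obs mu) (predI [pred x' : Cfg X | x' u == x u] F)
    = fQ mu u E' * \prod_(v | (rk v < rk u)%N) fQ mu v E.
  rewrite /Prob.
  have -> : \sum_(i | predI [pred x' : Cfg X | x' u == x u] F i) obs mu i
      = \sum_(x' | gagree [set w | (rk w < (rk u).+1)%N] x' E') obs mu x'.
    apply: eq_bigl => x' /=; apply/andP/forallP => [[/eqP xu /forallP h] w|h].
      rewrite inE ltnS leq_eqVlt; apply/implyP => /orP[/eqP e|lt].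
        by rewrite (rkI e) /E' upd_same xu.
      have wu : u != w by apply/eqP => e; move: lt; rewrite e ltnn.
      by rewrite /E' upd_other // ffunE; apply: (implyP (h w)).
    split.
      by have := implyP (h u); rewrite inE ltnS leqnn /E' upd_same => /(_ isT).
    apply/forallP => w; apply/implyP => /= lt.
    have wu : u != w by apply/eqP => e; move: lt; rewrite e ltnn.
    have := implyP (h w); rewrite inE ltnS (ltnW lt) /E' upd_other // ffunE.
    by move/(_ isT).
  rewrite (ML hmu) (bigD1 u) //=; congr (_ * _).
  apply: eq_big => [v|v lt].
    case: (eqVneq v u) => [->|vu]; first by rewrite ltnn ltnS leqnn.
    rewrite andbT ltnS leq_eqVlt; case: eqP => // /rkI e; by rewrite e eqxx in vu.
  move: lt => /andP[hv vu]; rewrite ltnS in hv.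
  apply: indep_fQ => // [w /= wv|]; last by rewrite eq_sym.
  apply/eqP => e; move: wv; rewrite e => lt.
  by move: (leq_trans lt hv); rewrite ltnn.
have hne : Prob (obs mu) F != 0.
  by apply: (Prob_neq0 (x0 := E) hpos) => /=; apply/forallP => w; rewrite ffunE eqxx implybT.
rewrite /cond hnum -hden mulfK //.
rewrite /fQ pacfg_upd; last by move=> w /= wu; apply/eqP => e; move: wu; rewrite e ltnn.
rewrite /E' upd_same; congr Q; apply/ffunP => w; rewrite !ffunE //.
Qed.
End Part3c.
Lemma Afkey (V : finType) (de bi : rel V) (A : {set V}) s v :
  s \in Af de bi A -> s \in A :\: DV de bi A v.
Proof.
rewrite /Af /DV !inE => /andP[nU sA]; rewrite sA andbT.
apply/bigcupP => -[S /andP[SD _] sS]; apply: (negP nU).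
by apply/bigcupP; exists S.
Qed.

Section Part4.
Variables (V : finType) (X : V -> finType) (R : realFieldType) (rk : V -> nat).
Variables (de bi : rel V) (A Y : {set V}) (a : Cfg X).
Hypothesis dAY : [disjoint A & Y].
Local Notation gd := [rel w v : V | (rk w < rk v)%N].
Local Notation al := [rel w v : V | (rk w < rk v)%N && (w \in A :\: DV de bi A v)].
Local Notation ea := (fun (w : V) (_ : V) => a w).
Variables (p : Cfg X -> R).
Hypothesis hp : is_pos_distr p.

Definition Fe u (x : Cfg X) : R :=
  cond p [pred x' : Cfg X | x' u == x u]
    [pred x' : Cfg X | [forall w, gd w u ==> (x' w == if al w u then ea w u else x w)]].

Lemma indepFe u s : s \in Af de bi A -> s != u -> indep (Fe u) s.
Proof.
move=> sAf su x c; apply: cond_ext => x' /=; first by rewrite upd_other.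
apply: eq_forallb => w; case: (boolP (rk w < rk u)%N) => //= wu.
case: (eqVneq s w) => [<-|sw]; last by rewrite upd_other.
by rewrite (Afkey u sAf).
Qed.

Lemma sumFe s (x : Cfg X) : \sum_(c : X s) Fe s (upd x s c) = 1.
Proof.
pose G := [pred x' : Cfg X | [forall w, gd w s ==> (x' w == if al w s then ea w s else x w)]].
have -> : \sum_(c : X s) Fe s (upd x s c) = \sum_(c : X s) cond p [pred x' : Cfg X | x' s == c] G.
  apply: eq_bigr => c _; apply: cond_ext => x' /=; first by rewrite upd_same.
  apply: eq_forallb => w; case: (boolP (rk w < rk s)%N) => //= ws.
  rewrite upd_other //; apply/eqP => e; move: ws; rewrite e ltnn //.
apply: sum_cond; apply: (Prob_neq0 (x0 := [ffun w => if al w s then ea w s else x w])).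
  by case: hp.
by apply/forallP => w /=; rewrite ffunE eqxx implybT.
Qed.

Lemma part4 y : margin Y (edge_gformula gd al ea p) y = gfunctional de bi rk A Y a p y.
Proof.
pose N := ~: Af de bi A.
pose B := Af de bi A.
have dj : [disjoint N & B] by rewrite disjoints_subset subxx.
have BY : forall s, s \in B -> s \notin Y.
  move=> s sB; have sA : s \in A by move: sB; rewrite /B /Af inE => /andP[].
  by rewrite (disjointFr dAY sA).
have HP : forall s (x : Cfg X) c, s \in B -> agree Y (upd x s c) y = agree Y x y.
  by move=> s x c sB; apply: gagree_upd; apply: BY.
have H1 : forall s v, s \in B -> v \in N -> indep (Fe v) s.
  move=> s v sB vN; apply: indepFe => //; apply/eqP => e.
  by move: vN; rewrite inE -e sB.
have H2 : forall s v, s \in B -> v \in B -> s != v -> (0 <= 0)%N -> indep (Fe v) s.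
  by move=> s v sB _ sv _; apply: indepFe.
have H3 : forall s (x : Cfg X), s \in B -> \sum_c Fe s (upd x s c) = 1.
  by move=> s x _; apply: sumFe.
have := @Gen V X R (fun _ => 0%N) N Fe (fun _ => 1) y B (fun x => agree Y x y) dj HP H1 H2 H3.
rewrite big1_eq mulr1 => H.
rewrite /margin /edge_gformula.
have -> : \sum_(x | agree Y x y) \prod_u Fe u x
   = \sum_(x | agree Y x y) \prod_(v | (v \in N) || (v \in B)) Fe v x.
  by apply: eq_bigr => x _; apply: eq_bigl => v; rewrite [v \in N]inE orNb.
rewrite H /gfunctional /=; apply: eq_big => [z|z _].
  exact: (esym (gagreeU Y (Af de bi A) z y)).
apply: eq_bigr => u _; apply: cond_ext => x' //=.
apply: eq_forallb => w; case: (rk w < rk u)%N => //.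
Qed.
End Part4.

Lemma rk_dag (V : finType) (rk : V -> nat) : is_DAG [rel w v : V | (rk w < rk v)%N].
Proof.
move=> w v /= wv; apply/negP => /connectP[q pth e].
have : forall q0 (v0 : V), path [rel w v : V | (rk w < rk v)%N] v0 q0 -> (rk v0 <= rk (last v0 q0))%N.
  elim=> [|z q1 IH] v0 //= /andP[h1 h2].
  exact: leq_trans (ltnW h1) (IH z h2).
move=> /(_ q v pth); rewrite -e => h.
by move: (leq_trans wv h); rewrite ltnn.
Qed.

Theorem lemma19 (V : finType) (X : V -> finType) (R : realFieldType)
  (de bi : rel V) (A Y : {set V}) (rk : V -> nat) (a : Cfg X) :
  is_ADMG de bi ->
  [disjoint A & Y] ->
  injective rk -> (forall w v, de w v -> (rk w < rk v)%N) ->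
  anc de Y = [set: V] ->
  [set: V] :\: anc (induced de (~: A)) Y \subset A ->
  (forall S, S \in districts bi (~: A) ->
     (pa de S :\: S) :&: DS de bi S = set0) ->
  (forall S1 S2, S1 \in districts bi (~: A) -> S2 \in districts bi (~: A) ->
     DS de bi S1 :&: DS de bi S2 != set0 -> S1 = S2) ->
  exists (gd al : rel V) (ea : forall w v : V, X w),
    [/\ is_DAG gd,
        (forall w v, al w v -> gd w v),
        (forall mu : Omega X gd -> R, MWM mu ->
           (forall x, 0 < obs mu x) ->
           forall y : Cfg X,
             margin Y (cf al ea mu) y
             = margin Y (edge_gformula gd al ea (obs mu)) y)
      & (forall p : Cfg X -> R, is_pos_distr p ->
           forall y : Cfg X,
             margin Y (edge_gformula gd al ea p) y
             = gfunctional de bi rk A Y a p y)].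
Proof.
move=> _ dAY rkI _ _ _ _ _.
exists [rel w v : V | (rk w < rk v)%N],
       [rel w v : V | (rk w < rk v)%N && (w \in A :\: DV de bi A v)],
       (fun (w : V) (_ : V) => a w).
split.
- exact: rk_dag.
- by move=> w v /andP[].
- move=> mu hmu hpos y; rewrite /margin; apply: eq_bigr => x _.
  exact: part3pt.
- move=> p hp y; exact: part4.
Qed.
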